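(* Let $n\ge2$, $0\le\alpha<1$, $\sigma=1-\alpha^2$, and let $M$ be the matrix of $S^*(\phi_{-\alpha})$, where $\phi_{-\alpha}(z)=\left(\dfrac{z+\alpha}{1+\alpha z}\right)^n$; explicitly $M$ is the $n\times n$ upper triangular Toeplitz matrix with $-\alpha$ on the diagonal, $\sigma$ on the first superdiagonal and $\sigma\alpha^{j-1}$ on the $j$-th superdiagonal ($1\le j\le n-1$). For real $\theta$ and real $\lambda$ with $|\lambda|<1$, let $D_n(\lambda,\theta)=\det\big(\mathscr{R}e(e^{-i\theta}M)-\lambda I_n\big)$. Then $$D_{n}(\lambda,\theta)=\dfrac{(1-\lambda^{2})^{-\frac{1}{2}}}{2^n}\,\mathscr{R}e\Bigg(\left(\left(1-\lambda^{2}\right)^{\frac{1}{2}}+i\lambda\right)\left(-2\alpha\cos\theta-(1+\alpha^{2})\lambda+i(1-\alpha^{2})(1-\lambda^{2})^{\frac{1}{2}}\right)^n\Bigg).$$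
   Context: $\mathscr{R}e(X)=\frac12(X+X^* )$ for a matrix $X$, and $\mathscr{R}e(z)$ is the real part of a complex number $z$. $S^*(\phi)$ denotes the restriction of the backward shift $S^*f=(f-f(0))/z$ to the model space $\mathbb{H}^2\ominus\phi\mathbb{H}^2$. *)

(* Defs.v *)
From HB Require Import structures.
From mathcomp Require Import all_boot all_order all_algebra.
From mathcomp Require Import all_classical all_reals all_analysis.
From mathcomp Require Import complex.
Set Implicit Arguments. Unset Strict Implicit. Unset Printing Implicit Defensive.
Import Order.TTheory GRing.Theory Num.Theory.
Local Open Scope ring_scope.
Local Open Scope complex_scope.

Definition Smat (R : realType) (n : nat) (alpha : R) : 'M[R[i]]_n :=
  \matrix_(i < n, j < n)
    (if i == j then (- alpha)%:C
     else if (i < j)%N then ((1 - alpha ^+ 2) * alpha ^+ (j - i).-1)%:C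
     else 0).

Definition adjmx (R : realType) (n : nat) (X : 'M[R[i]]_n) : 'M[R[i]]_n :=
  (map_mx conjc X)^T.
Definition ReMx (R : realType) (n : nat) (X : 'M[R[i]]_n) : 'M[R[i]]_n :=
  (2^-1 : R[i]) *: (X + adjmx X).

Definition expiC (R : realType) (theta : R) : R[i] := cos theta +i* sin theta.

Definition Dn (R : realType) (n : nat) (alpha lambda theta : R) : R[i] :=
  \det (ReMx (expiC (- theta) *: Smat n alpha) - (lambda%:C)%:M).

(* Main.v *)
Require Import Defs.
From HB Require Import structures.
From mathcomp Require Import all_boot all_order all_algebra.
From mathcomp Require Import all_classical all_reals all_analysis.
From mathcomp Require Import complex.
From mathcomp Require Import ring lra.
Set Implicit Arguments. Unset Strict Implicit. Unset Printing Implicit Defensive.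
Import Order.TTheory GRing.Theory Num.Theory.
Local Open Scope ring_scope.


Definition Mf (R : comNzRingType) (f : nat -> nat -> R) (k : nat) : 'M[R]_k :=
  \matrix_(i < k, j < k) f i j.

Definition Pm (R : comNzRingType) (a : R) (m : nat) : 'M[R]_(m.+2) :=
  \matrix_(i < m.+2, j < m.+2)
    ((val i == val j)%:R - a * ((val i == m.+1) && (val j == m))%:R).

Lemma det_Pm (R : comNzRingType) (a : R) m : \det (Pm a m) = 1.
Proof.
rewrite det_trig.
  apply: big1 => i _; rewrite mxE eqxx /=.
  case: (eqVneq (val i) m) => [->|_]; last by rewrite andbF mulr0 subr0.
  by rewrite (ltn_eqF (ltnSn m)) mulr0 subr0.
apply/forallP => i; apply/forallP => j; apply/implyP => lij.
rewrite mxE (ltn_eqF lij) /=.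
case: (eqVneq (val i) m.+1) => [ei|_]; last by rewrite mulr0 subr0.
case: (eqVneq (val j) m) => [ej|_]; last by rewrite mulr0 subr0.
by move: lij; rewrite ei ej ltnNge leqnSn.
Qed.

Lemma PmA (R : comNzRingType) (a : R) m (A : 'M[R]_(m.+2)) i j :
  (Pm a m *m A) i j = A i j - a * ((val i == m.+1)%:R * A (inord m) j).
Proof.
rewrite mxE.
under eq_bigr => k _ do rewrite mxE mulrBl.
rewrite sumrB; congr (_ - _).
  rewrite (bigD1 i) //= eqxx mul1r big1 ?addr0 // => k ki.
  by rewrite eq_sym val_eqE (negbTE ki) mul0r.
rewrite (bigD1 (inord m)) //= inordK // eqxx andbT big1 ?addr0; last first.
  move=> k km; case: (eqVneq (val k) m) => [ek|]; last by rewrite andbF mulr0 mul0r.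
  by move: km; rewrite -val_eqE /= inordK // ek eqxx.
by rewrite mulrA.
Qed.

Lemma APm (R : comNzRingType) (a : R) m (A : 'M[R]_(m.+2)) i j :
  (A *m (Pm a m)^T) i j = A i j - a * ((val j == m.+1)%:R * A i (inord m)).
Proof. by rewrite -[A]trmxK -trmx_mul mxE PmA !mxE. Qed.

Lemma Kentry (R : comNzRingType) (f : nat -> nat -> R) (a : R) m i j :
  (Pm a m *m Mf f m.+2 *m (Pm a m)^T) i j =
  (f i j - a * ((val i == m.+1)%:R * f m j))
  - a * ((val j == m.+1)%:R * (f i m - a * ((val i == m.+1)%:R * f m m))).
Proof. by rewrite APm !PmA !mxE !inordK. Qed.

Lemma bump_lt h k : (k < h)%N -> bump h k = k.
Proof. by move=> hk; rewrite /bump leqNgt hk. Qed.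
Lemma bump_ge h k : (h <= k)%N -> bump h k = k.+1.
Proof. by move=> hk; rewrite /bump hk add1n. Qed.

Lemma det_rec (R : comNzRingType) (f : nat -> nat -> R) (a : R) m :
  (forall i, (i < m)%N -> f i m.+1 = a * f i m) ->
  (forall j, (j < m)%N -> f m.+1 j = a * f m j) ->
  \det (Mf f m.+2) =
   (f m.+1 m.+1 - a * f m m.+1 - a * f m.+1 m + a ^+ 2 * f m m) * \det (Mf f m.+1)
   - (f m m.+1 - a * f m m) * (f m.+1 m - a * f m m) * \det (Mf f m).
Proof.
move=> Hc Hr.
have -> : \det (Mf f m.+2) = \det (Pm a m *m Mf f m.+2 *m (Pm a m)^T).
  by rewrite !det_mulmx det_tr det_Pm mul1r mulr1.
set K := (Pm a m *m Mf f m.+2 *m (Pm a m)^T).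
rewrite (expand_det_col K ord_max) !big_ord_recr /= big1; last first.
  move=> i _; rewrite Kentry /=.
  rewrite (ltn_eqF (ltn_trans (ltn_ord i) (ltnSn m))).
  by rewrite eqxx !mul0r !mulr0 !subr0 mul1r Hc // subrr mul0r.
rewrite add0r !Kentry /= eqxx (ltn_eqF (ltnSn m)) !mul0r !mulr0 !subr0 !mul1r.
rewrite /cofactor /=.
have KE i j : K i j = (f i j - a * ((val i == m.+1)%:R * f m j))
  - a * ((val j == m.+1)%:R * (f i m - a * ((val i == m.+1)%:R * f m m))) by exact: Kentry.
clearbody K.
have H1 : \det (row' ord_max (col' ord_max K)) = \det (Mf f m.+1).
  congr (\det _); apply/matrixP => i j; rewrite !mxE KE !lift_max /=.
  rewrite !bump_lt // !(ltn_eqF (ltn_ord _)).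
  by rewrite !mul0r !mulr0 !subr0.
have H2 : \det (row' (widen_ord (leqnSn m.+1) ord_max) (col' ord_max K))
    = (f m.+1 m - a * f m m) * \det (Mf f m).
  rewrite (expand_det_row _ ord_max) big_ord_recr /= big1 ?add0r; last first.
    move=> j _; rewrite !mxE KE /= bump_ge // !bump_lt //; last first.
      by apply: (ltn_trans (ltn_ord j)).
    rewrite eqxx (ltn_eqF (ltn_trans (ltn_ord j) (ltnSn m))) mul0r mulr0 subr0 mul1r.
    by rewrite Hr // subrr mul0r.
  rewrite !mxE KE /= bump_ge // bump_lt // eqxx (ltn_eqF (ltnSn m)) mul0r mulr0 subr0 mul1r.
  congr (_ * _); rewrite /cofactor -signr_odd oddD addbb expr0 mul1r.
  congr (\det _); apply/matrixP => i j; rewrite !mxE KE /= !bump_lt //; last by apply: (ltn_trans (ltn_ord j)).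
  rewrite !(ltn_eqF (ltn_trans (ltn_ord _) (ltnSn m))).
  by rewrite !mul0r !mulr0 !subr0.
rewrite H1 H2.
have s1 : (-1) ^+ (m + m.+1) = -1 :> R.
  by rewrite -signr_odd addnS oddS oddD addbb expr1.
have s2 : (-1) ^+ (m.+1 + m.+1) = 1 :> R.
  by rewrite -signr_odd oddD addbb expr0.
rewrite s1 s2.
set D1 := \det (Mf f m.+1); set D0 := \det (Mf f m).
ring.
Qed.

Local Open Scope complex_scope.


Definition fe (R : rcfType) (al c s l : R) (i j : nat) : R[i] :=
  if i == j then (-(al*c) - l) +i* 0
  else if (i < j)%N then ((1 - al^+2)/2 * al^+(j-i).-1 * c) +i* (-((1 - al^+2)/2 * al^+(j-i).-1 * s))
  else ((1 - al^+2)/2 * al^+(i-j).-1 * c) +i* ((1 - al^+2)/2 * al^+(i-j).-1 * s).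

Lemma fe_Hc (R : rcfType) (al c s l : R) m i : (i < m)%N ->
  fe al c s l i m.+1 = al%:C * fe al c s l i m.
Proof.
move=> im; rewrite /fe (ltn_eqF (ltn_trans im (ltnSn m))) (ltn_eqF im) (ltn_trans im (ltnSn m)) im.
have -> : (m.+1 - i).-1 = ((m - i).-1).+1.
  rewrite subSn; last exact: ltnW. rewrite prednK // subn_gt0 //.
change (al%:C) with (al +i* 0).
simpc. rewrite [al ^+ (_.-1.+1)]exprS; congr (_ +i* _); ring.
Qed.

Lemma fe_Hr (R : rcfType) (al c s l : R) m j : (j < m)%N ->
  fe al c s l m.+1 j = al%:C * fe al c s l m j.
Proof.
move=> jm; rewrite /fe eq_sym (ltn_eqF (ltn_trans jm (ltnSn m))) eq_sym (ltn_eqF jm).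
rewrite ltnNge (ltnW (ltn_trans jm (ltnSn m))) ltnNge (ltnW jm) /=.
have -> : (m.+1 - j).-1 = ((m - j).-1).+1.
  rewrite subSn; last exact: ltnW. rewrite prednK // subn_gt0 //.
change (al%:C) with (al +i* 0).
simpc. rewrite [al ^+ (_.-1.+1)]exprS; congr (_ +i* _); ring.
Qed.

Lemma cE (R : rcfType) (x : R) : x%:C = x +i* 0. Proof. by []. Qed.

Definition Dm (R : rcfType) (al c s l : R) n := \det (Mf (fe al c s l) n).

Lemma Dm_rec (R : rcfType) (al c s l sq : R) m :
  c ^+ 2 + s ^+ 2 = 1 -> sq ^+ 2 = 1 - l ^+ 2 ->
  Dm al c s l m.+2 =
   (- 2 * al * c - (1 + al ^+ 2) * l)%:C * Dm al c s l m.+1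
   - (((- 2 * al * c - (1 + al ^+ 2) * l) ^+ 2 + ((1 - al ^+ 2) * sq) ^+ 2) / 4)%:C
     * Dm al c s l m.
Proof.
move=> cs sq2; rewrite /Dm (det_rec (a := al%:C)); last first.
- by move=> j; apply: fe_Hr.
- by move=> i; apply: fe_Hc.
rewrite /fe !eqxx (ltn_eqF (ltnSn m)) eq_sym (ltn_eqF (ltnSn m)) ltnSn ltnNge leqnSn /=.
rewrite subSn // subnn /=.
change (al%:C) with (al +i* 0).
congr (_ * _ - _ * _).
  rewrite !cE; simpc; congr (_ +i* _); field; lra.
rewrite !cE !expr0 !mulr1; simpc; congr (_ +i* _); last ring.
have -> : (1 - al ^+ 2) / 2 * s * ((1 - al ^+ 2) / 2 * s) = ((1 - al ^+ 2) / 2)^+2 * s^+2 by ring.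
have -> : s ^+ 2 = 1 - c ^+ 2 by rewrite -cs; ring.
rewrite !exprMn sq2; field; lra.
Qed.

Lemma Re_rec (R : rcfType) (u : R[i]) (x y : R) n :
  complex.Re (u * (x +i* y) ^+ n.+2) =
  2 * x * complex.Re (u * (x +i* y) ^+ n.+1) - (x ^+ 2 + y ^+ 2) * complex.Re (u * (x +i* y) ^+ n).
Proof.
rewrite !exprSr !mulrA; case: (u * _ ^+ n) => a b; simpc => /=; ring.
Qed.

Definition Gf (R : rcfType) (al c l sq : R) n :=
  complex.Re ((sq +i* l) *
    ((- 2 * al * c - (1 + al ^+ 2) * l) +i* ((1 - al ^+ 2) * sq)) ^+ n).

Lemma Dm_closed (R : rcfType) (al c s l sq : R) :
  c ^+ 2 + s ^+ 2 = 1 -> sq ^+ 2 = 1 - l ^+ 2 -> 0 < sq -> forall n,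
  Dm al c s l n = (Gf al c l sq n / (sq * 2 ^+ n))%:C.
Proof.
move=> cs sq2 sqp.
have H : forall n, (Dm al c s l n = (Gf al c l sq n / (sq * 2 ^+ n))%:C) /\ (Dm al c s l n.+1 = (Gf al c l sq n.+1 / (sq * 2 ^+ n.+1))%:C).
  elim=> [|n [IH1 IH2]].
    split.
      rewrite /Dm det_mx00 /Gf expr0 mulr1 /= mulr1 divff //; lra.
    rewrite /Dm det_mx11 mxE /fe /= /Gf expr1 /=; congr (_ +i* _).
    field; lra.
  split => //.
  rewrite (@Dm_rec R al c s l sq n cs sq2) IH1 IH2 -!rmorphM -rmorphB; congr (_%:C).
  rewrite /Gf Re_rec -/(Gf al c l sq n.+1) -/(Gf al c l sq n).
  rewrite !exprS; field; by rewrite expf_neq0 ?(gt_eqF sqp) // pnatr_eq0.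
by move=> n; case: (H n).
Qed.

Local Open Scope complex_scope.

Lemma Dn_Dm (R : realType) (n : nat) (al l th : R) :
  Dn n al l th = Dm al (cos th) (sin th) l n.
Proof.
rewrite /Dn /Dm /Mf /ReMx /adjmx; congr (\det _); apply/matrixP => i j; rewrite !mxE.
rewrite /expiC cosN sinN /fe -!val_eqE /=.
have c2 : (2^-1 : R[i]) = (2^-1 : R) +i* 0 by rewrite -cE fmorphV /= rmorph_nat.
rewrite c2.
have z0 : (0 : R[i]) = 0 +i* 0 by [].
case: ltngtP => h; rewrite ?mulr0n ?mulr1n !cE ?z0; simpc; congr (_ +i* _).
1-4: ring.
by field.
Qed.



Unset Implicit Arguments.

Theorem mainTheorem7 (R : realType) (n : nat) (alpha theta lambda : R) :
  (2 <= n)%N -> 0 <= alpha -> alpha < 1 -> `|lambda| < 1 ->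
  Dn n alpha lambda theta =
  ((Num.sqrt (1 - lambda ^+ 2))^-1 / 2 ^+ n)%:C *
  (complex.Re ((Num.sqrt (1 - lambda ^+ 2) +i* lambda) *
       ((- 2 * alpha * cos theta - (1 + alpha ^+ 2) * lambda)
          +i* ((1 - alpha ^+ 2) * Num.sqrt (1 - lambda ^+ 2))) ^+ n))%:C.
Proof.
move=> _ _ _ hl.
have hl2 : 0 < 1 - lambda ^+ 2.
  move: hl; rewrite ltr_norml => /andP [h1 h2]; nra.
have sqp : 0 < Num.sqrt (1 - lambda ^+ 2) by rewrite sqrtr_gt0.
have sq2 : Num.sqrt (1 - lambda ^+ 2) ^+ 2 = 1 - lambda ^+ 2 by rewrite sqr_sqrtr // ltW.
rewrite Dn_Dm (@Dm_closed R alpha (cos theta) (sin theta) lambda _ (cos2Dsin2 theta) sq2 sqp n).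
rewrite -rmorphM; congr (_%:C); rewrite /Gf.
field; by rewrite expf_neq0 ?(gt_eqF sqp) // pnatr_eq0.
Qed.
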